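(* Consider a binary MILP (maximization) solved by branch-and-bound with the worst-bound node selection rule and an LP solver satisfying Assumption 1. Then the branch-and-bound tree never branches on a node whose LP optimal objective value equals the optimal objective value of the MILP.
   Context: Branch-and-bound for a binary MILP $\max\{c^\top x: x\in P,\ x_1,\dots,x_n\in\{0,1\}\}$: each node is the LP relaxation with some binary variables fixed to $0$ or $1$; a node is pruned if its LP is infeasible, if the returned LP solution is integral, or if its LP value is worse than the value of an integral solution already found; the worst-bound rule selects next an open node with the largest LP value. Assumption 1: if the LP at a node has an integral optimal solution, the LP solver returns one. *)

(* Defs.v *)
From HB Require Import structures.
From mathcomp Require Import all_boot all_order all_algebra.
Set Implicit Arguments. Unset Strict Implicit. Unset Printing Implicit Defensive.
Import Order.TTheory GRing.Theory Num.Theory.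
Local Open Scope ring_scope.

(* A node of the B&B tree: a partial fixing of variables to 0 (false) / 1 (true). *)
Definition fixing (d : nat) := {ffun 'I_d -> option bool}.

Definition root_fixing (d : nat) : fixing d := [ffun => None].

Definition child (d : nat) (f : fixing d) (i : 'I_d) (bb : bool) : fixing d :=
  [ffun j => if j == i then Some bb else f j].

Section BB.
Variables (R : realFieldType) (m d : nat).
Variables (A : 'M[R]_(m, d)) (b : 'cV[R]_m) (c : 'cV[R]_d) (bin : {set 'I_d}).

Definition inP (x : 'cV[R]_d) : Prop := forall k, (A *m x) k 0 <= b k 0.

Definition obj (x : 'cV[R]_d) : R := \sum_(j < d) c j 0 * x j 0.

Definition bin_int (x : 'cV[R]_d) : bool :=
  [forall j in bin, (x j 0 == 0) || (x j 0 == 1)].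

Definition milp_feas (x : 'cV[R]_d) : Prop := inP x /\ bin_int x.
Definition milp_opt (x : 'cV[R]_d) : Prop :=
  milp_feas x /\ forall y, milp_feas y -> obj y <= obj x.

Definition respects (f : fixing d) (x : 'cV[R]_d) : Prop :=
  forall j bb, f j = Some bb -> x j 0 = (if bb then 1 else 0).
Definition lp_feas (f : fixing d) (x : 'cV[R]_d) : Prop := inP x /\ respects f x.
Definition lp_opt (f : fixing d) (x : 'cV[R]_d) : Prop :=
  lp_feas f x /\ forall y, lp_feas f y -> obj y <= obj x.

Variable sol : fixing d -> option 'cV[R]_d.

Definition lp_solver : Prop :=
  forall f, (sol f = None -> ~ exists x, lp_feas f x) /\
            (forall x, sol f = Some x -> lp_opt f x).

Definition assumption1 : Prop :=
  forall f, (exists x, lp_opt f x /\ bin_int x) ->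
            exists x, sol f = Some x /\ bin_int x.

(* LP value of a node (only meaningful when the LP is feasible) *)
Definition node_value (f : fixing d) : R :=
  if sol f is Some x then obj x else 0.

(* state: list of open nodes, value of the best integral solution found so far *)
Definition state := (seq (fixing d) * option R)%type.

Definition below (inc : option R) (v : R) : Prop :=
  if inc is Some z then v <= z else False.

(* solve the LP of a newly created node: prune if infeasible, or if integral
   (updating the incumbent); otherwise the node becomes open *)
Definition process_node (s : state) (f : fixing d) : state :=
  match sol f with
  | None => s
  | Some x =>
      if bin_int x then
        (s.1, Some (if s.2 is Some v then Num.max v (obj x) else obj x))
      else (rcons s.1 f, s.2)
  end.

Definition init_state : state := process_node ([::], None) (root_fixing d).

(* worst-bound: f is an open node of largest LP value, and it is not
   prunable by bound *)
Definition can_branch (s : state) (f : fixing d) : Prop :=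
  [/\ f \in s.1, ~ below s.2 (node_value f) &
      forall g, g \in s.1 -> node_value g <= node_value f].

Definition branch_step (s : state) (f : fixing d) (i : 'I_d) (s' : state) : Prop :=
  [/\ can_branch s f, i \in bin, f i = None &
      s' = foldl process_node (rem f s.1, s.2) [:: child f i false; child f i true]].

Inductive bb_step : state -> state -> Prop :=
| bb_prune s f : f \in s.1 -> below s.2 (node_value f) -> bb_step s (rem f s.1, s.2)
| bb_branch s f i s' : branch_step s f i s' -> bb_step s s'.

Inductive reachable : state -> Prop :=
| reach_init : reachable init_state
| reach_step s s' : reachable s -> bb_step s s' -> reachable s'.

End BB.

(* Main.v *)
Require Import Defs.
From HB Require Import structures.
From mathcomp Require Import all_boot all_order all_algebra.
Import Order.TTheory GRing.Theory Num.Theory.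
Local Open Scope ring_scope.

Section Aux.
Variables (R : realFieldType) (m d : nat)
  (A : 'M[R]_(m, d)) (b : 'cV[R]_m) (c : 'cV[R]_d) (bin : {set 'I_d})
  (sol : fixing d -> option 'cV[R]_d) (xstar : 'cV[R]_d).
Hypotheses (Hopt : milp_opt A b c bin xstar) (Hsol : lp_solver A b c sol).

Definition open_ok (s : state R d) := forall g, g \in s.1 ->
  exists y, sol g = Some y /\ ~~ bin_int bin y.
Definition inc_ok (s : state R d) := forall z, s.2 = Some z -> z <= obj c xstar.
Definition lb_ok (s : state R d) := exists z, s.2 = Some z /\ obj c xstar <= z.
Definition goal_ok (s : state R d) :=
  lb_ok s \/ exists g, g \in s.1 /\ respects g xstar.

Local Notation pn := (process_node c bin sol).

Lemma opt_val {f y} : sol f = Some y -> lp_feas A b f xstar -> obj c xstar <= obj c y.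
Proof. move=> E H; have [_ H2] := Hsol f; exact: (H2 y E).2 _ H. Qed.

Lemma int_val {f y} : sol f = Some y -> bin_int bin y -> obj c y <= obj c xstar.
Proof.
move=> E Hb; have [_ H2] := Hsol f; have [[Hp _] _] := H2 y E.
exact: Hopt.2 _ (conj Hp Hb).
Qed.

Lemma pn_open s f : open_ok s -> open_ok (pn s f).
Proof.
rewrite /process_node; case E: (sol f) => [x|] // Ho.
case: ifP => Hb //= g; rewrite mem_rcons inE => /orP [/eqP->|]; last exact: Ho.
by exists x; rewrite Hb.
Qed.

Lemma pn_inc s f : inc_ok s -> inc_ok (pn s f).
Proof.
rewrite /process_node; case E: (sol f) => [x|] // Ho.
case: ifP => Hb //= z [<-].
have Hx := int_val E Hb.
case E2: s.2 => [v|] //; rewrite ge_max Hx andbT; exact: Ho.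
Qed.

Lemma pn_mem s f g : g \in s.1 -> g \in (pn s f).1.
Proof.
rewrite /process_node; case: (sol f) => [x|] // H.
by case: ifP => //= _; rewrite mem_rcons inE H orbT.
Qed.

Lemma pn_lb s f : lb_ok s -> lb_ok (pn s f).
Proof.
move=> [z [E H]]; rewrite /process_node; case: (sol f) => [x|]; last by exists z.
case: ifP => /= _; last by exists z. rewrite E; eexists; split; first reflexivity.
by rewrite le_max H.
Qed.

Lemma pn_goal s f : goal_ok s -> goal_ok (pn s f).
Proof.
case=> [H|[g [Hg Hr]]]; first by left; exact: pn_lb.
by right; exists g; split => //; exact: pn_mem.
Qed.

Lemma pn_new s f : lp_feas A b f xstar -> goal_ok (pn s f).
Proof.
move=> Hf; rewrite /process_node; case E: (sol f) => [x|].
  have Hx := opt_val E Hf.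
  case: ifP => Hb /=.
    left; eexists; split; first reflexivity.
    by case: s.2 => [v|] //; rewrite le_max Hx orbT.
  by right; exists f; rewrite mem_rcons inE eqxx; split => //; case: Hf.
by exfalso; have [H1 _] := Hsol f; apply: (H1 E); exists xstar.
Qed.

Lemma resp_child f i bb : respects f xstar -> xstar i 0 = (if bb then 1 else 0) ->
  respects (child f i bb) xstar.
Proof.
move=> Hr Hi j bb'; rewrite ffunE; case: eqP => [-> [<-]|_] //; exact: Hr.
Qed.

Lemma invariant s : reachable c bin sol s -> [/\ open_ok s, inc_ok s & goal_ok s].
Proof.
elim=> [|s0 s1 _ [Ho Hi Hg] st].
  split; [exact: pn_open| exact: pn_inc| apply: pn_new].
  split; first exact: Hopt.1.1.
  by move=> j bb; rewrite ffunE.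
case: st Ho Hi Hg => [s2 f Hf Hb | s2 f i s3 [[Hf Hnb Hmax] Hib Hfi ->]] Ho Hi Hg /=.
- split.
  + by move=> g /= Hg'; apply: Ho; exact: (mem_rem Hg').
  + by move=> z /= Hz; exact: Hi.
  + case: Hg => [[z [Ez Hz]]|[g [Hg Hr]]]; first by left; exists z.
    case: (eqVneq g f) => [Egf|Ngf].
      subst g; left; have [y [Ey _]] := Ho f Hf.
      move: Hb; rewrite /below /node_value Ey.
      case Ez: s2.2 => [z|] // Hyz; exists z; split => //.
      apply: le_trans Hyz; apply: (opt_val Ey); split => //; exact: Hopt.1.1.
    by right; exists g; split => //=; exact: rem_mem.
- split.
  + by apply: pn_open; apply: pn_open => g /= Hg'; apply: Ho; exact: (mem_rem Hg').
  + by apply: pn_inc; apply: pn_inc.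
  + case: Hg => [[z [Ez Hz]]|[g [Hg Hr]]].
      by left; apply: pn_lb; apply: pn_lb; exists z.
    case: (eqVneq g f) => [Egf|Ngf]; last first.
      right; exists g; split => //; apply: pn_mem; apply: pn_mem; exact: rem_mem.
    subst g.
    have := forallP Hopt.1.2 i; rewrite Hib /= => /orP [/eqP H0|/eqP H1].
      apply: pn_goal; apply: pn_new; split; first exact: Hopt.1.1.
      exact: resp_child.
    apply: pn_new; split; first exact: Hopt.1.1.
    exact: resp_child.
Qed.

End Aux.

Theorem mainTheorem8 (R : realFieldType) (m d : nat)
  (A : 'M[R]_(m, d)) (b : 'cV[R]_m) (c : 'cV[R]_d) (bin : {set 'I_d})
  (sol : fixing d -> option 'cV[R]_d) (xstar : 'cV[R]_d) :
  milp_opt A b c bin xstar ->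
  lp_solver A b c sol ->
  assumption1 A b c bin sol ->
  forall (s s' : state R d) (f : fixing d) (i : 'I_d),
    reachable c bin sol s ->
    branch_step c bin sol s f i s' ->
    node_value c sol f <> obj c xstar.
Proof.
move=> Hopt Hsol Ha1 s s' f i Hr [[Hf Hnb Hmax] _ _ _] Hv.
have [Ho _ Hg] := @invariant _ _ _ A b c bin sol xstar Hopt Hsol s Hr.
case: Hg => [[z [Ez Hz]]|[g [Hg Hrg]]].
  by apply: Hnb; rewrite /below Ez Hv.
have [y [Ey Hny]] := Ho g Hg.
have Hgy := Hmax g Hg; rewrite Hv /node_value Ey in Hgy.
have [x' [Ex' Hbx']] : exists x, sol g = Some x /\ bin_int bin x.
  apply: Ha1; exists xstar; split; last exact: Hopt.1.2.
  split; first by split; [exact: Hopt.1.1|].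
  move=> z Hz; apply: le_trans Hgy.
  have [_ H2] := Hsol g; exact: (H2 y Ey).2 _ Hz.
by move: Hny; rewrite Ey in Ex'; case: Ex' => ->; rewrite Hbx'.
Qed.
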